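(* Let $R$ be a $*$-ring and $P(R)$ its prime radical. Then $R$ is strongly $J$-$*$-clean if and only if $R$ is abelian and $R/P(R)$, with the induced involution $(a+P(R))^*=a^*+P(R)$, is strongly $J$-$*$-clean.
   Context: All rings are associative with identity. A $*$-ring is a ring $R$ with an involution $*$, i.e. a map $a\mapsto a^*$ with $(a+b)^*=a^*+b^*$, $(ab)^*=b^*a^*$, $(a^* )^*=a$. The prime radical $P(R)$ is the intersection of all prime ideals of $R$; it satisfies $P(R)^*\subseteq P(R)$, so $R/P(R)$ inherits an involution. $J(S)$ denotes the Jacobson radical of a ring $S$. A projection is an element $e$ with $e^2=e=e^*$. A $*$-ring $S$ is strongly $J$-$*$-clean if every $a\in S$ can be written $a=e+u$ with $e$ a projection, $u\in J(S)$ and $ae=ea$. A ring is abelian if all its idempotents are central. *)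

(* Defs.v *)
From HB Require Import structures.
From mathcomp Require Import all_boot all_order all_algebra.
Set Implicit Arguments. Unset Strict Implicit. Unset Printing Implicit Defensive.
Import GRing.Theory.
Local Open Scope ring_scope.

Section StarRings.
Variable R : pzRingType.
Implicit Types (star : R -> R) (I A B L : R -> Prop).

Definition is_involution star : Prop :=
  (forall a b, star (a + b) = star a + star b) /\
  (forall a b, star (a * b) = star b * star a) /\
  (forall a, star (star a) = a).

Definition projection star (e : R) : Prop := e * e = e /\ star e = e.

Definition left_ideal L : Prop :=
  L 0 /\ (forall x y, L x -> L y -> L (x + y)) /\ (forall r x, L x -> L (r * x)).

Definition maximal_left_ideal L : Prop :=
  left_ideal L /\ ~ L 1 /\
  forall L', left_ideal L' -> (forall x, L x -> L' x) ->
    (forall x, L' x -> L x) \/ (forall x, L' x).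

Definition jacobson (x : R) : Prop :=
  forall M, maximal_left_ideal M -> M x.

Definition two_sided_ideal I : Prop :=
  I 0 /\ (forall x y, I x -> I y -> I (x + y)) /\
  (forall r x, I x -> I (r * x)) /\ (forall r x, I x -> I (x * r)).

Definition prime_ideal I : Prop :=
  two_sided_ideal I /\ ~ I 1 /\
  forall A B, two_sided_ideal A -> two_sided_ideal B ->
    (forall a b, A a -> B b -> I (a * b)) ->
    (forall a, A a -> I a) \/ (forall b, B b -> I b).

Definition prime_radical (x : R) : Prop :=
  forall P, prime_ideal P -> P x.

Definition abelian_ring : Prop :=
  forall e : R, e * e = e -> forall x : R, e * x = x * e.

Definition strongly_J_star_clean star : Prop :=
  forall a, exists e u, projection star e /\ jacobson u /\ a = e + u /\ a * e = e * a.

End StarRings.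

(* (S, f) presents S, with involution starS, as the *-ring quotient R/I:
   f is a surjective ring morphism with kernel exactly I, and starS is the
   involution induced by star, i.e. starS (f a) = f (star a). *)
Definition star_quotient (R S : pzRingType) (star : R -> R) (starS : S -> S)
    (I : R -> Prop) (f : {rmorphism R -> S}) : Prop :=
  (forall s : S, exists a : R, f a = s) /\
  (forall a : R, f a = 0 <-> I a) /\
  (forall a : R, starS (f a) = f (star a)).

(* Main.v *)
Require Import Defs.
From HB Require Import structures.
From mathcomp Require Import all_boot all_order all_algebra.
From mathcomp Require Import boolp classical_sets.
From mathcomp Require Import ring.
Import GRing.Theory.
Local Open Scope ring_scope.

Local Open Scope classical_set_scope.

Lemma zorn_max (T : Type) (Q : (T -> Prop) -> Prop) (A0 : T -> Prop) :
  (forall F : (T -> Prop) -> Prop,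
     (forall X, F X -> Q X /\ (forall x, A0 x -> X x)) ->
     (forall X Y, F X -> F Y -> (forall x, X x -> Y x) \/ (forall x, Y x -> X x)) ->
     (exists X, F X) ->
     Q (fun x => exists2 X, F X & X x)) ->
  Q A0 -> (exists x, A0 x) ->
  exists M, Q M /\ (forall x, A0 x -> M x) /\
    forall B, Q B -> (forall x, M x -> B x) -> forall x, B x -> M x.
Proof.
move=> H1 QA0 [x0 Ax0].
pose P' := fun A : set T => (Q A /\ (forall x, A0 x -> A x)) \/ (forall x, ~ A x).
have [M [PM Mmax]] : exists A, P' A /\ forall B, A `<` B -> ~ P' B.
  apply: Zorn_bigcup => F FP Ftot.
  case: (pselect (exists X, F X /\ Q X /\ (forall x, A0 x -> X x))) => [[X0 [FX0 [QX0 AX0]]]|nX].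
  - pose F' := fun X => F X /\ Q X /\ (forall x, A0 x -> X x).
    have E : (\bigcup_(X in F) X) = (fun x => exists2 X, F' X & X x).
      apply/seteqP; split => x /=.
      + move=> [X FX Xx]; exists X => //; split => //.
        by case: (FP X FX) => // /(_ x).
      + by move=> [X [FX _] Xx]; exists X.
    left; rewrite E; split.
    + apply: H1; first by move=> X [].
      * by move=> X Y [FX _] [FY _]; case: (Ftot X Y FX FY) => h; [left|right].
      * by exists X0.
    + by move=> x Ax; exists X0 => //; apply: AX0.
  - right => x [X FX Xx].
    case: (FP X FX) => [[QX AX]|/(_ x)//].
    by apply: nX; exists X.
case: PM => [[QM AM]|Me].
  exists M; split => //; split => // B QB MB x Bx.
  apply: contrapT => nMx.
  apply: (Mmax B); last by left; split => // y /AM /MB.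
  by split => // /(_ x Bx).
exfalso; apply: (Mmax A0); last by left.
by split => [x /Me//|/(_ x0 Ax0) /Me].
Qed.

Local Close Scope classical_set_scope.

Local Open Scope quotient_scope.

Lemma PR0 (R : pzRingType) : prime_radical (0 : R).
Proof. by move=> P [[H0 _] _]. Qed.
Lemma PRD (R : pzRingType) (x y : R) :
  prime_radical x -> prime_radical y -> prime_radical (x + y).
Proof. by move=> hx hy P hP; case: (hP) => [[_ [HD _]] _]; apply: HD; [apply: hx|apply: hy]. Qed.
Lemma PRMl (R : pzRingType) (r x : R) : prime_radical x -> prime_radical (r * x).
Proof. by move=> hx P hP; case: (hP) => [[_ [_ [HM _]]] _]; apply: HM; apply: hx. Qed.
Lemma PRMr (R : pzRingType) (r x : R) : prime_radical x -> prime_radical (x * r).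
Proof. by move=> hx P hP; case: (hP) => [[_ [_ [_ HM]]] _]; apply: HM; apply: hx. Qed.
Lemma PRN (R : pzRingType) (x : R) : prime_radical x -> prime_radical (- x).
Proof. by move=> hx; rewrite -mulN1r; apply: PRMl. Qed.
Lemma PRB (R : pzRingType) (x y : R) :
  prime_radical x -> prime_radical y -> prime_radical (x - y).
Proof. by move=> hx hy; apply: PRD => //; apply: PRN. Qed.

Arguments PR0 {R}.
Arguments PRD {R x y}.
Arguments PRMl {R} r {x}.
Arguments PRMr {R} r {x}.
Arguments PRN {R x}.
Arguments PRB {R x y}.

Definition qeqv (R : pzRingType) (x y : R) : bool := `[< prime_radical (x - y) >].

Lemma qeqv_is_equiv (R : pzRingType) : equiv_class_of (@qeqv R).
Proof.
split=> [x|x y|y x z]; rewrite /qeqv.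
- by apply/asboolP; rewrite subrr; apply: PR0.
- apply/asboolP/asboolP => h; by rewrite -opprB; apply: PRN.
- move=> /asboolP h1 /asboolP h2; apply/asboolP.
  by rewrite -[x](addrNK y) -addrA; apply: PRD.
Qed.

Canonical qeqv_equiv (R : pzRingType) := EquivRelPack (qeqv_is_equiv R).
Canonical qeqv_encModRel (R : pzRingType) := defaultEncModRel (@qeqv R).

Definition quot (R : pzRingType) := {eq_quot (@qeqv R)}.
HB.instance Definition _ (R : pzRingType) : EqQuotient R (@qeqv R) (quot R) :=
  EqQuotient.on (quot R).
HB.instance Definition _ (R : pzRingType) := Choice.on (quot R).

Section Q.
Context (R : pzRingType).
Local Notation Q := (quot R).
Definition qpi (x : R) : Q := \pi_Q x.

Lemma qpiP (x y : R) : qpi x = qpi y <-> prime_radical (x - y).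
Proof.
split => [/eqP|h]; first by rewrite /qpi piE => /asboolP.
by apply/eqP; rewrite /qpi piE; apply/asboolP.
Qed.

Lemma qpi_surj (s : Q) : qpi (repr s) = s.
Proof. by rewrite /qpi reprK. Qed.

Definition qzero : Q := qpi 0.
Definition qadd (x y : Q) : Q := qpi (repr x + repr y).
Definition qopp (x : Q) : Q := qpi (- repr x).
Definition qone : Q := qpi 1.
Definition qmul (x y : Q) : Q := qpi (repr x * repr y).

Lemma rP (x : R) : prime_radical (repr (qpi x) - x).
Proof. by apply/qpiP; rewrite qpi_surj. Qed.

Lemma qaddE x y : qadd (qpi x) (qpi y) = qpi (x + y).
Proof.
apply/qpiP; have := PRD (rP x) (rP y).
by congr prime_radical; rewrite opprD !addrA; congr (_ + _); rewrite addrAC.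
Qed.
Lemma qoppE x : qopp (qpi x) = qpi (- x).
Proof. apply/qpiP; rewrite opprK addrC -opprB; apply: PRN; exact: rP. Qed.
Lemma qmulE x y : qmul (qpi x) (qpi y) = qpi (x * y).
Proof.
apply/qpiP.
have -> : repr (qpi x) * repr (qpi y) - x * y =
  repr (qpi x) * (repr (qpi y) - y) + (repr (qpi x) - x) * y.
  by rewrite mulrBr mulrBl addrA addrNK.
by apply: PRD; [apply: PRMl|apply: PRMr]; apply: rP.
Qed.

Lemma qind (P : Q -> Prop) : (forall x, P (qpi x)) -> forall s, P s.
Proof. by move=> h s; rewrite -(qpi_surj s). Qed.

Lemma qaddA : associative qadd.
Proof. by elim/qind=> x; elim/qind=> y; elim/qind=> z; rewrite !qaddE addrA. Qed.
Lemma qaddC : commutative qadd.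
Proof. by elim/qind=> x; elim/qind=> y; rewrite !qaddE addrC. Qed.
Lemma qadd0 : left_id qzero qadd.
Proof. by elim/qind=> x; rewrite /qzero qaddE add0r. Qed.
Lemma qaddN : left_inverse qzero qopp qadd.
Proof. by elim/qind=> x; rewrite qoppE qaddE addNr. Qed.

Lemma qpi_zmod0 (x y : R) : qpi (x - y) = qadd (qpi x) (qopp (qpi y)).
Proof. by rewrite qoppE qaddE. Qed.

HB.instance Definition _ := GRing.isZmodule.Build Q qaddA qaddC qadd0 qaddN.

Lemma qmulA : associative qmul.
Proof. by elim/qind=> x; elim/qind=> y; elim/qind=> z; rewrite !qmulE mulrA. Qed.
Lemma qmul1 : left_id qone qmul.
Proof. by elim/qind=> x; rewrite /qone qmulE mul1r. Qed.
Lemma qmulr1 : right_id qone qmul.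
Proof. by elim/qind=> x; rewrite /qone qmulE mulr1. Qed.
Lemma qmulDl : left_distributive qmul qadd.
Proof. by elim/qind=> x; elim/qind=> y; elim/qind=> z; rewrite !(qaddE, qmulE) mulrDl. Qed.
Lemma qmulDr : right_distributive qmul qadd.
Proof. by elim/qind=> x; elim/qind=> y; elim/qind=> z; rewrite !(qaddE, qmulE) mulrDr. Qed.

HB.instance Definition _ := GRing.Zmodule_isPzRing.Build Q qmulA qmul1 qmulr1 qmulDl qmulDr.

Lemma qpi_zmod : zmod_morphism qpi.
Proof. by move=> x y; rewrite qpi_zmod0. Qed.
HB.instance Definition _ := GRing.isZmodMorphism.Build R Q qpi qpi_zmod.
Lemma qpi_monoid : monoid_morphism qpi.
Proof. by split => // x y; rewrite -[RHS]/(qmul (qpi x) (qpi y)) qmulE. Qed.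
HB.instance Definition _ := GRing.isMonoidMorphism.Build R Q qpi qpi_monoid.

Lemma qpi0 x : qpi x = 0 <-> prime_radical x.
Proof. by rewrite -(rmorph0 qpi) qpiP subr0. Qed.
End Q.



Local Close Scope quotient_scope.


Lemma li_opp (R : pzRingType) (L : R -> Prop) x : left_ideal L -> L x -> L (- x).
Proof. by move=> [_ [_ HM]] Lx; rewrite -mulN1r; apply: HM. Qed.
Lemma li_sub (R : pzRingType) (L : R -> Prop) x y : left_ideal L -> L x -> L y -> L (x - y).
Proof. move=> hL Lx Ly; case: (hL) => [_ [HD _]]; apply: HD => //; exact: li_opp. Qed.

Lemma PR_max (R : pzRingType) (M : R -> Prop) x :
  maximal_left_ideal M -> prime_radical x -> M x.
Proof.
move=> [[M0 [MD MM]] [M1 Mmax]] hx.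
pose Q := fun y : R => forall r, M (y * r).
have QP : prime_ideal Q.
  split; [split; [|split; [|split]]|split].
  - by move=> r; rewrite mul0r.
  - by move=> y z Qy Qz r; rewrite mulrDl; apply: MD.
  - by move=> s y Qy r; rewrite -mulrA; apply: MM.
  - by move=> s y Qy r; rewrite -mulrA.
  - by move=> /(_ 1); rewrite mulr1.
  move=> A B [A0 [AD [AMl AMr]]] [B0 [BD [BMl BMr]]] AB.
  case: (pselect (forall b, B b -> Q b)) => hB; [by right|left].
  have [b0 [Bb0 [s nMs]]] : exists b0, B b0 /\ exists s, ~ M (b0 * s).
    apply: contrapT => hn; apply: hB => b Bb r; apply: contrapT => nM.
    by apply: hn; exists b; split => //; exists r.
  pose L' := fun y => exists b m, B b /\ M m /\ y = b + m.
  have LL : left_ideal L'.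
    split; [|split].
    - by exists 0, 0; rewrite addr0.
    - move=> y z [b [m [Bb [Mm ->]]]] [b' [m' [Bb' [Mm' ->]]]].
      exists (b + b'), (m + m'); split; [exact: BD|split; [exact: MD|]].
      by rewrite addrACA.
    - move=> r y [b [m [Bb [Mm ->]]]]; exists (r * b), (r * m).
      by split; [exact: BMl|split; [exact: MM|rewrite mulrDr]].
  case: (Mmax L' LL) => [y My|hsub|hall].
  - by exists 0, y; rewrite add0r.
  - by exfalso; apply: nMs; apply: hsub; exists (b0 * s), 0; rewrite addr0; split => //; apply: BMr.
  - move=> a Aa r; case: (hall r) => [b [m [Bb [Mm ->]]]].
    rewrite mulrDr; apply: MD; last exact: MM.
    by have := AB a b Aa Bb 1; rewrite mulr1.
by have := hx Q QP 1; rewrite mulr1.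
Qed.

Lemma J_leftinv (R : pzRingType) (u : R) : jacobson u ->
  forall x, exists y, y * (1 - x * u) = 1.
Proof.
move=> Ju x; apply: contrapT => hn.
pose A0 := fun z : R => exists r, z = r * (1 - x * u).
pose Q := fun L : R -> Prop => left_ideal L /\ ~ L 1.
have [M [[ML M1] [AM Mmax]]] : exists M, Q M /\ (forall z, A0 z -> M z) /\
    forall B, Q B -> (forall z, M z -> B z) -> forall z, B z -> M z.
  apply: zorn_max.
  - move=> F FQ Ftot [X FX]; split; [split; [|split]|].
    + by exists X => //; case: (FQ X FX) => [[[]]].
    + move=> y z [Y FY Yy] [Z FZ Zz].
      case: (Ftot Y Z FY FZ) => h.
      * exists Z => //; case: (FQ Z FZ) => [[[_ [HD _]] _] _]; apply: HD => //; exact: h.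
      * exists Y => //; case: (FQ Y FY) => [[[_ [HD _]] _] _]; apply: HD => //; exact: h.
    + move=> r y [Y FY Yy]; exists Y => //.
      by case: (FQ Y FY) => [[[_ [_ HM]] _] _]; apply: HM.
    + by move=> [Y FY Y1]; case: (FQ Y FY) => [[_ HY] _]; apply: HY.
  - split; [split; [|split]|].
    + by exists 0; rewrite mul0r.
    + by move=> y z [r ->] [s ->]; exists (r + s); rewrite mulrDl.
    + by move=> r y [s ->]; exists (r * s); rewrite mulrA.
    + by move=> [r h]; apply: hn; exists r.
  - by exists 0, 0; rewrite mul0r.
have MM : maximal_left_ideal M.
  split => //; split => // L' hL' ML'.
  case: (pselect (L' 1)) => h1.
    by right => z; rewrite -[z]mulr1; case: hL' => [_ [_ HM]]; apply: HM.
  by left; apply: Mmax.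
have Mu := Ju M MM.
have Mxu : M (x * u) by case: ML => [_ [_ HM]]; apply: HM.
have M1xu : M (1 - x * u) by apply: AM; exists 1; rewrite mul1r.
apply: M1; have -> : (1 : R) = (1 - x * u) + x * u by rewrite subrK.
by case: ML => [_ [HD _]]; apply: HD.
Qed.

Arguments J_leftinv {R u}.

Lemma J_cube (R : pzRingType) (u : R) : jacobson u -> u * u * u = u -> u = 0.
Proof.
move=> Ju h; have [y hy] := J_leftinv Ju u.
have : y * ((1 - u * u) * u) = 0 by rewrite mulrBl mul1r h subrr mulr0.
by rewrite mulrA hy mul1r.
Qed.

Lemma PR_J (R : pzRingType) (x : R) : prime_radical x -> jacobson x.
Proof. by move=> hx M hM; apply: PR_max. Qed.

Lemma PR_nil (R : pzRingType) (x : R) : prime_radical x -> exists n, x ^+ n = 0.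
Proof.
move=> hx; apply: contrapT => hn.
have hn' : forall n, x ^+ n <> 0 by move=> n h; apply: hn; exists n.
pose Q := fun I : R -> Prop => two_sided_ideal I /\ forall n, ~ I (x ^+ n).
have [M [[MI Mn] [_ Mmax]]] : exists M, Q M /\ (forall z, z = 0 -> M z) /\
    forall B, Q B -> (forall z, M z -> B z) -> forall z, B z -> M z.
  apply: zorn_max.
  - move=> F FQ Ftot [X FX]; split; [split; [|split; [|split]]|].
    + by exists X => //; case: (FQ X FX) => [[[]]].
    + move=> y z [Y FY Yy] [Z FZ Zz].
      case: (Ftot Y Z FY FZ) => h.
      * exists Z => //; case: (FQ Z FZ) => [[[_ [HD _]] _] _]; apply: HD => //; exact: h.
      * exists Y => //; case: (FQ Y FY) => [[[_ [HD _]] _] _]; apply: HD => //; exact: h.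
    + move=> r y [Y FY Yy]; exists Y => //.
      by case: (FQ Y FY) => [[[_ [_ [HM _]]] _] _]; apply: HM.
    + move=> r y [Y FY Yy]; exists Y => //.
      by case: (FQ Y FY) => [[[_ [_ [_ HM]]] _] _]; apply: HM.
    + by move=> n [Y FY Y1]; case: (FQ Y FY) => [[_ HY] _]; apply: (HY n).
  - split; [split; [|split; [|split]]|].
    + by [].
    + by move=> y z -> ->; rewrite addr0.
    + by move=> r y ->; rewrite mulr0.
    + by move=> r y ->; rewrite mul0r.
    + by move=> n; apply: hn'.
  - by exists 0.
have [M0 [MD [MMl MMr]]] := MI.
have MP : prime_ideal M.
  split => //; split; first by move=> h; apply: (Mn 0); rewrite expr0.
  move=> A B [A0 [AD [AMl AMr]]] [B0 [BD [BMl BMr]]] AB.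
  have key : forall C : R -> Prop, two_sided_ideal C -> ~ (forall c, C c -> M c) ->
      exists n c m, C c /\ M m /\ x ^+ n = c + m.
    move=> C [C0 [CD [CMl CMr]]] nC.
    pose CM := fun y => exists c m, C c /\ M m /\ y = c + m.
    have CMI : two_sided_ideal CM.
      split; [|split; [|split]].
      - by exists 0, 0; rewrite addr0.
      - move=> y z [b [m [Bb [Mm ->]]]] [b' [m' [Bb' [Mm' ->]]]].
        exists (b + b'), (m + m'); split; [exact: CD|split; [exact: MD|]].
        by rewrite addrACA.
      - move=> r y [b [m [Bb [Mm ->]]]]; exists (r * b), (r * m).
        by split; [exact: CMl|split; [exact: MMl|rewrite mulrDr]].
      - move=> r y [b [m [Bb [Mm ->]]]]; exists (b * r), (m * r).
        by split; [exact: CMr|split; [exact: MMr|rewrite mulrDl]].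
    apply: contrapT => hne; apply: nC => c Cc.
    have h := Mmax CM; have : CM c by exists c, 0; rewrite addr0.
    apply: h; last by move=> z Mz; exists 0, z; rewrite add0r.
    split => // n [c' [m [Cc' [Mm hxn]]]]; apply: hne; by exists n, c', m.
  case: (pselect (forall a, A a -> M a)) => hA; first by left.
  case: (pselect (forall b, B b -> M b)) => hB; first by right.
  have [i [a [m [Aa [Mm hi]]]]] := key A (conj A0 (conj AD (conj AMl AMr))) hA.
  have [j [b [m' [Bb [Mm' hj]]]]] := key B (conj B0 (conj BD (conj BMl BMr))) hB.
  exfalso; apply: (Mn (i + j)%N); rewrite exprD hi hj mulrDl !mulrDr.
  apply: (MD); apply: (MD); [exact: AB|exact: (MMl)|exact: (MMr)|exact: (MMr)].
by apply: (Mn 1%N); rewrite expr1; apply: hx.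
Qed.



Fixpoint Gk (k : nat) : {poly int} :=
  match k with 0 => 'X | k'.+1 => 3%:R * (Gk k') ^+ 2 - 2%:R * (Gk k') ^+ 3 end.
Definition Nk k := Gk k - Gk k ^+ 2.

Lemma NkS k : Nk k.+1 = Nk k ^+ 2 * (3%:R + 4%:R * Nk k).
Proof. rewrite /Nk /=; ring. Qed.

Lemma Nk_pow k : exists C, Nk k = Nk 0 ^+ (2 ^ k) * C.
Proof.
elim: k => [|k [C hC]]; first by exists 1; rewrite expn0 expr1 mulr1.
exists (C ^+ 2 * (3%:R + 4%:R * Nk k)); rewrite NkS hC expnS mul2n -addnn exprD.
ring.
Qed.

Lemma Gk_X k : exists D, Gk k - 'X = Nk 0 * D.
Proof.
elim: k => [|k [D hD]]; first by exists 0; rewrite subrr mulr0.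
have [C hC] := Nk_pow k.
have h2 : (2 ^ k = 1 + (2 ^ k).-1)%N by rewrite add1n prednK // expn_gt0.
have -> : Gk k.+1 - 'X = - Nk k * (1 - 2%:R * Gk k) + (Gk k - 'X).
  rewrite /Nk /=; ring.
rewrite hD hC h2 exprD expr1.
exists (- (Nk 0 ^+ (2 ^ k).-1 * C * (1 - 2%:R * Gk k)) + D); ring.
Qed.

Lemma lift_nz (R : nzRingType) (b : R) K : (b - b * b) ^+ K = 0 ->
  exists e, e * e = e /\ exists c, e - b = (b - b * b) * c.
Proof.
move=> hK.
have cf : commr_rmorph (intr : int -> R) b by move=> z; apply: commr_int.
have hphX : (horner_morph cf) 'X = b by apply: horner_morphX.
have hX : (horner_morph cf : {rmorphism {poly int} -> R}) 'X = b := horner_morphX cf.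
have hphN : (horner_morph cf : {rmorphism {poly int} -> R}) (Nk 0) = b - b * b.
  by rewrite /Nk /= rmorphB rmorphXn hX expr2.
exists ((horner_morph cf) (Gk K)); split.
  apply/eqP; rewrite -subr_eq0 -opprB oppr_eq0; apply/eqP.
  have [C hC] := Nk_pow K.
  have -> : (horner_morph cf) (Gk K) - (horner_morph cf) (Gk K) * (horner_morph cf) (Gk K) = (horner_morph cf) (Nk K) by rewrite /Nk rmorphB rmorphXn expr2.
  rewrite hC rmorphM rmorphXn hphN.
  have hle : (K <= 2 ^ K)%N by apply: ltnW; apply: ltn_expl.
  by rewrite -(subnKC hle) exprD hK mul0r mul0r.
have [D hD] := Gk_X K.
exists ((horner_morph cf) D); by rewrite -{2}hX -rmorphB hD rmorphM hphN.
Qed.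

Definition nzR (R : pzRingType) (h : (1 : R) != 0) : nzRingType :=
  HB.pack R (GRing.PzSemiRing_isNonZero.Build R h).

Lemma lift (R : pzRingType) (b : R) K : (b - b * b) ^+ K = 0 ->
  exists e, e * e = e /\ exists c, e - b = (b - b * b) * c.
Proof.
case: (eqVneq (1 : R) 0) => h1.
  move=> _; exists 0; split; first by rewrite mul0r.
  exists 0; by rewrite mulr0 -[LHS]mul1r h1 mul0r.
exact (@lift_nz (nzR R h1) b K).
Qed.



Lemma J_mul (R : pzRingType) (r x : R) : jacobson x -> jacobson (r * x).
Proof. by move=> Jx M hM; case: (hM) => [[_ [_ HM]] _]; apply: HM; apply: Jx. Qed.

Arguments J_mul {R} r {x}.

Lemma J_idem0 (R : pzRingType) (x : R) : jacobson x -> x * x = x -> x = 0.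
Proof.
move=> Jx hx; have [y hy] := J_leftinv Jx 1.
have : y * ((1 - 1 * x) * x) = 0 by rewrite mul1r mulrBl mul1r hx subrr mulr0.
by rewrite mulrA hy mul1r.
Qed.

Arguments J_idem0 {R x}.

Lemma idem_eq (R : pzRingType) (e p : R) : e * e = e -> p * p = p -> e * p = p * e ->
  jacobson (e - p) -> e = p.
Proof.
have step : forall e p : R, e * e = e -> p * p = p -> e * p = p * e ->
    jacobson (e - p) -> e = e * p.
  move=> {}e {}p he hp hc J.
  have h1 : e * (e * p) = e * p by rewrite mulrA he.
  have h2 : e * p * e = e * p by rewrite -mulrA -hc mulrA he.
  have h3 : e * p * (e * p) = e * p by rewrite mulrA h2 -mulrA hp.
  have J' : jacobson (e - e * p) by have := J_mul e J; rewrite mulrBr he.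
  have := J_idem0 J'; rewrite mulrBl !mulrBr he h1 h2 h3 subrr subr0 => /(_ erefl).
  by move/eqP; rewrite subr_eq0 => /eqP.
move=> he hp hc J.
have J' : jacobson (p - e) by rewrite -opprB -mulN1r; apply: J_mul.
by rewrite (step e p) // hc -(step p e).
Qed.

Section Star.
Context (R : pzRingType) (star : R -> R) (Hstar : is_involution star).

Lemma star0 : star 0 = 0.
Proof. have [sD _] := Hstar; by apply: (addrI (star 0)); rewrite -sD !addr0. Qed.
Lemma starN x : star (- x) = - star x.
Proof. have [sD _] := Hstar; by apply: (addrI (star x)); rewrite -sD !subrr star0. Qed.
Lemma starB x y : star (x - y) = star x - star y.
Proof. have [sD _] := Hstar; by rewrite sD starN. Qed.
Lemma star1 : star 1 = 1.
Proof.
have [_ [sM sK]] := Hstar; have := sM (star 1) 1.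
by rewrite mulr1 sK => h; rewrite [RHS]h mulr1.
Qed.

Lemma ts_star (I : R -> Prop) : two_sided_ideal I -> two_sided_ideal (fun y => I (star y)).
Proof.
have [sD [sM _]] := Hstar.
move=> [I0 [ID [IMl IMr]]]; split; [|split; [|split]].
- by rewrite star0.
- by move=> x y hx hy; rewrite sD; apply: ID.
- by move=> r x hx; rewrite sM; apply: IMr.
- by move=> r x hx; rewrite sM; apply: IMl.
Qed.

Lemma PR_star x : prime_radical x -> prime_radical (star x).
Proof.
have [sD [sM sK]] := Hstar.
move=> hx Q [QI [Q1 Qp]]; apply: (hx (fun y => Q (star y))).
split; first exact: ts_star.
split; first by rewrite star1.
move=> A B hA hB AB.
have := Qp _ _ (ts_star _ hB) (ts_star _ hA).
case.
- move=> b' a' Bb Aa; have := AB _ _ Aa Bb; by rewrite sM !sK.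
- by move=> h; right => b Bb; apply: h; rewrite sK.
- by move=> h; left => a Aa; apply: h; rewrite sK.
Qed.
End Star.



Lemma J_push (R S : pzRingType) (f : {rmorphism R -> S}) (x : R) :
  (forall s, exists a, f a = s) -> jacobson x -> jacobson (f x).
Proof.
move=> fs Jx M' [[M0 [MD MM]] [M1 Mmax]].
pose pre := fun r => M' (f r).
have hpre : maximal_left_ideal pre.
  split; [split; [|split]|split].
  - by rewrite /pre rmorph0.
  - by move=> y z hy hz; rewrite /pre rmorphD; apply: MD.
  - by move=> r y hy; rewrite /pre rmorphM; apply: MM.
  - by rewrite /pre rmorph1.
  move=> L' [L0 [LD LM]] sub.
  pose im := fun s => exists l, L' l /\ f l = s.
  have him : left_ideal im.
    split; [|split].
    - by exists 0; rewrite rmorph0.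
    - by move=> y z [l [Ll <-]] [l' [Ll' <-]]; exists (l + l'); rewrite rmorphD; split => //; apply: LD.
    - move=> r y [l [Ll <-]]; have [r0 <-] := fs r; exists (r0 * l).
      by rewrite rmorphM; split => //; apply: LM.
  case: (Mmax im him).
  - by move=> s Ms; have [r hr] := fs s; exists r; split => //; apply: sub; rewrite /pre hr.
  - by move=> h; left => l Ll; apply: h; exists l.
  - move=> h; right => r; have [l [Ll hl]] := h 1.
    have hl1 : L' (l - 1) by apply: sub; rewrite /pre rmorphB hl rmorph1 subrr.
    have L1 : L' 1.
      have -> : (1 : R) = l - (l - 1) by rewrite opprB addrC subrK.
      by apply: LD => //; rewrite -mulN1r; apply: LM.
    by rewrite -[r]mulr1; apply: LM.
exact: (Jx pre hpre).
Qed.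

Lemma J_pull (R S : pzRingType) (f : {rmorphism R -> S}) (x : R) :
  (forall s, exists a, f a = s) -> (forall a, f a = 0 -> prime_radical a) ->
  jacobson (f x) -> jacobson x.
Proof.
move=> fs fk Jx M hM.
have PM : forall y, prime_radical y -> M y by move=> y; apply: PR_max.
have [[M0 [MD MM]] [M1 Mmax]] := hM.
have MB : forall y z, M y -> M z -> M (y - z).
  by move=> y z hy hz; apply: MD => //; rewrite -mulN1r; apply: MM.
pose im := fun s => exists m, M m /\ f m = s.
have him : maximal_left_ideal im.
  split; [split; [|split]|split].
  - by exists 0; rewrite rmorph0.
  - by move=> y z [l [Ll <-]] [l' [Ll' <-]]; exists (l + l'); rewrite rmorphD; split => //; apply: MD.
  - move=> r y [l [Ll <-]]; have [r0 <-] := fs r; exists (r0 * l).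
    by rewrite rmorphM; split => //; apply: MM.
  - move=> [m [Mm hm]]; apply: M1.
    have hk : M (m - 1) by apply: PM; apply: fk; rewrite rmorphB hm rmorph1 subrr.
    by have := MB _ _ Mm hk; rewrite opprB addrC subrK.
  move=> L' [L0 [LD LM]] sub.
  pose pre := fun r => L' (f r).
  have hpre : left_ideal pre.
    split; [|split].
    - by rewrite /pre rmorph0.
    - by move=> y z hy hz; rewrite /pre rmorphD; apply: LD.
    - by move=> r y hy; rewrite /pre rmorphM; apply: LM.
  case: (Mmax pre hpre).
  - by move=> m Mm; apply: sub; exists m.
  - move=> h; left => s Ls; have [r hr] := fs s; exists r; split => //.
    by apply: h; rewrite /pre hr.
  - by move=> h; right => s; have [r <-] := fs s; apply: h.
have [m [Mm hm]] := Jx im him.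
have hk : M (m - x) by apply: PM; apply: fk; rewrite rmorphB hm subrr.
by have := MB _ _ Mm hk; rewrite opprB addrC subrK.
Qed.



Lemma idem_proj (R : pzRingType) (star : R -> R) (e : R) :
  strongly_J_star_clean star -> e * e = e -> star e = e.
Proof.
move=> SJ he; have [p [u [[pp sp] [Ju [hpu hc]]]]] := SJ e.
have hu : e - p = u by rewrite hpu [p + u]addrC addrK.
have ep : e = p by apply: idem_eq => //; rewrite hu.
by rewrite ep.
Qed.

Arguments idem_proj {R star e}.
Arguments starB {R star}.
Arguments star1 {R star}.
Arguments starN {R star}.
Arguments PR_star {R star}.

Lemma SJ_abelian (R : pzRingType) (star : R -> R) (Hstar : is_involution star) :
  strongly_J_star_clean star -> abelian_ring R.
Proof.
move=> SJ e he x.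
have [sD [sM sK]] := Hstar.
have se := idem_proj SJ he.
have s1e : star (1 - e) = 1 - e by rewrite (starB Hstar) (star1 Hstar) se.
have e1e : e * (1 - e) = 0 by rewrite mulrBr mulr1 he subrr.
have e1e' : (1 - e) * e = 0 by rewrite mulrBl mul1r he subrr.
have e11 : (1 - e) * (1 - e) = 1 - e by rewrite mulrBr mulr1 e1e' subr0.
have h1 : e * x * (1 - e) = 0.
  pose a := e * x * (1 - e).
  have hea : e * a = a by rewrite /a !mulrA he.
  have hae : a * e = 0 by rewrite /a -mulrA e1e' mulr0.
  have haa : a * a = 0 by rewrite /a -!mulrA [(1 - e) * (e * _)]mulrA e1e' mul0r !mulr0.
  have g2 : (e + a) * (e + a) = e + a by rewrite mulrDl !mulrDr he hea hae haa !addr0.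
  have := idem_proj SJ g2; rewrite sD se /a !sM s1e se => /addrI ha.
  have : e * a = 0 by rewrite /a -ha !mulrA e1e mul0r mul0r.
  by rewrite hea.
have h2 : (1 - e) * x * e = 0.
  pose b := (1 - e) * x * e.
  have heb : e * b = 0 by rewrite /b !mulrA e1e !mul0r.
  have hbe : b * e = b by rewrite /b -mulrA he.
  have hbb : b * b = 0 by rewrite /b -!mulrA [e * ((1 - e) * _)]mulrA e1e mul0r !mulr0.
  have g2 : (e + b) * (e + b) = e + b by rewrite mulrDl !mulrDr he heb hbe hbb !addr0.
  have := idem_proj SJ g2; rewrite sD se /b !sM s1e se => /addrI hb.
  have : (1 - e) * b = 0 by rewrite /b -hb !mulrA e1e' !mul0r.
  by rewrite /b !mulrA e11.
have h1' : e * x = e * x * e by move: h1; rewrite mulrBr mulr1 => /eqP; rewrite subr_eq0 => /eqP.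
have h2' : x * e = e * x * e by move: h2; rewrite !mulrBl mul1r => /eqP; rewrite subr_eq0 => /eqP.
by rewrite h2' -h1'.
Qed.



Theorem corollary3p9 (R : pzRingType) (star : R -> R) (Hstar : is_involution star) :
  strongly_J_star_clean star <->
  (abelian_ring R /\
   forall (S : pzRingType) (starS : S -> S) (f : {rmorphism R -> S}),
     star_quotient star starS (@prime_radical R) f ->
     strongly_J_star_clean starS).
Proof.
have [sD [sM sK]] := Hstar.
split.
  move=> SJ; split; first exact: SJ_abelian SJ.
  move=> S starS f [fs [fk fst]] s.
  have [a <-] := fs s.
  have [e [u [[ee se] [Ju [hau hc]]]]] := SJ a.
  exists (f e), (f u); split; [split|split].
  - by rewrite -rmorphM ee.
  - by rewrite fst se.
  - exact: J_push.
  - by split; [rewrite hau rmorphD|rewrite -!rmorphM hc].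
move=> [ab hS].
pose starS := fun s : quot R => qpi R (star (repr s)).
have hq : star_quotient star starS (@prime_radical R) (qpi R).
  split; first by move=> s; exists (repr s); apply: qpi_surj.
  split; first by move=> a; apply: qpi0.
  move=> a; rewrite /starS; apply/qpiP.
  rewrite -(starB Hstar); apply: (PR_star Hstar); exact: rP.
have SJS := hS _ _ _ hq.
move=> a.
have [p [w [[pp sp] [Jw [hpw _]]]]] := SJS (qpi R a).
pose b := repr p.
have qb : qpi R b = p by apply: qpi_surj.
have Pb : prime_radical (b - b * b).
  by apply/qpi0; rewrite rmorphB rmorphM /= qb pp subrr.
have [K hK] := @PR_nil _ _ Pb.
have [e [ee [c hc]]] := @lift _ _ _ hK.
have qe : qpi R e = p.
  by rewrite -qb; apply/qpiP; rewrite hc; exact: PRMr Pb.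
have see : star e * star e = star e by rewrite -sM ee.
have qse : qpi R (star e) = p.
  rewrite -sp /starS -qe; apply/qpiP.
  have := PRN (rP R e); rewrite opprB => h.
  rewrite -(starB Hstar); exact: (PR_star Hstar _ h).
have hse : star e = e.
  apply: idem_eq => //; first exact: (ab _ see).
  apply: PR_J; apply/qpiP; by rewrite qse qe.
exists e, (a - e); split; [split => //|split].
- apply: (@J_pull _ _ (qpi R)).
  + by move=> s; exists (repr s); apply: qpi_surj.
  + by move=> y; move/qpi0.
  + by rewrite rmorphB /= qe hpw addrC addKr.
- by split; [rewrite addrC subrK|apply/esym/ab].
Qed.
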